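(* Let $f:\mathbb{R}^d\to\mathbb{R}$ be $\mu$-strongly convex and $L$-smooth, with condition number $\kappa=L/\mu$, and let its unique minimizer $x^\star$ satisfy $\|x^\star\|\le r$. Consider SGD iterates $x^{(k+1)}=x^{(k)}-\eta\,\nabla f(x^{(k)};\xi^{(k)})$ with learning rate $\eta\in(0,1/L]$, where the stochastic gradient satisfies $\mathbb{E}[\nabla f(x^{(k)};\xi^{(k)})\mid x^{(k)}]=\nabla f(x^{(k)})$ and $\mathbb{E}\big[\|\nabla f(x^{(k)};\xi^{(k)})-\nabla f(x^{(k)})\|^2\mid x^{(k)}\big]\le\sigma^2$. Define $$R=r+\sqrt{\max(3,\kappa)}\,\sqrt{2r^2+\frac{\sigma^2}{L^2}}.$$ Then for every $k$, if $\|x^{(k)}\|\le R$, then $\mathbb{E}\big[\|x^{(k+1)}\|^2\,\big|\,x^{(k)}\big]\le R^2$; i.e. SGD is stable with respect to the second moment with radius $R$.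
   Context: $\|\cdot\|$ denotes the Euclidean norm. Stability with respect to the second moment: there exist a finite constant $R$ and an index $k_0$ such that for all $k\ge k_0$, whenever $\|x^{(k)}\|^2\le R^2$, one has $\mathbb{E}[\|x^{(k+1)}\|^2\mid x^{(k)}]\le R^2$. *)

(* Defs.v *)
From HB Require Import structures.
From mathcomp Require Import all_boot all_order all_algebra.
From mathcomp Require Import all_classical all_reals all_analysis.
Set Implicit Arguments. Unset Strict Implicit. Unset Printing Implicit Defensive.
Import Order.TTheory GRing.Theory Num.Theory.
Import numFieldNormedType.Exports.
Local Open Scope ring_scope.

Definition dotp (R : realType) (d : nat) (u v : 'rV[R]_d) : R :=
  \sum_(i < d) u 0 i * v 0 i.

(* Euclidean norm (the library norm on 'rV is the sup norm, so we define it). *)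
Definition enorm (R : realType) (d : nat) (v : 'rV[R]_d) : R :=
  Num.sqrt (dotp v v).

Definition is_gradient (R : realType) (d : nat) (f : 'rV[R]_d -> R)
  (gradf : 'rV[R]_d -> 'rV[R]_d) : Prop :=
  forall x, differentiable f x /\ forall v, 'd f x v = dotp (gradf x) v.

Definition strongly_convex (R : realType) (d : nat) (mu : R) (f : 'rV[R]_d -> R) : Prop :=
  0 < mu /\
  forall (x y : 'rV[R]_d) (t : R), 0 <= t <= 1 ->
    f (t *: x + (1 - t) *: y) <=
      t * f x + (1 - t) * f y - mu / 2 * t * (1 - t) * enorm (x - y) ^+ 2.

Definition smooth (R : realType) (d : nat) (L : R) (gradf : 'rV[R]_d -> 'rV[R]_d) : Prop :=
  0 < L /\ forall x y, enorm (gradf x - gradf y) <= L * enorm (x - y).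

Definition is_minimizer (R : realType) (d : nat) (f : 'rV[R]_d -> R) (xs : 'rV[R]_d) : Prop :=
  forall y, f xs <= f y.

(* Main.v *)
Require Import Defs.
From HB Require Import structures.
From mathcomp Require Import all_boot all_order all_algebra.
From mathcomp Require Import all_classical all_reals all_analysis.
From mathcomp Require Import ring lra.
From mathcomp Require Import measurable_realfun.
Import Order.TTheory GRing.Theory Num.Theory.
Import numFieldNormedType.Exports.
Local Open Scope ring_scope.

Section Dot.
Context {R : realType} {d : nat}.
Implicit Types u v w : 'rV[R]_d.

Lemma dotpC u v : dotp u v = dotp v u.
Proof. by apply: eq_bigr => i _; rewrite mulrC. Qed.

Lemma dotpDl u v w : dotp (u + v) w = dotp u w + dotp v w.
Proof. by rewrite /dotp -big_split; apply: eq_bigr => i _; rewrite mxE mulrDl. Qed.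

Lemma dotpZl a u v : dotp (a *: u) v = a * dotp u v.
Proof. by rewrite /dotp mulr_sumr; apply: eq_bigr => i _; rewrite mxE mulrA. Qed.

Lemma dotpNl u v : dotp (- u) v = - dotp u v.
Proof. by rewrite -scaleN1r dotpZl mulN1r. Qed.

Lemma dotpBl u v w : dotp (u - v) w = dotp u w - dotp v w.
Proof. by rewrite dotpDl dotpNl. Qed.

Lemma dotpDr u v w : dotp w (u + v) = dotp w u + dotp w v.
Proof. by rewrite dotpC dotpDl !(dotpC w). Qed.

Lemma dotpZr a u v : dotp v (a *: u) = a * dotp v u.
Proof. by rewrite dotpC dotpZl dotpC. Qed.

Lemma dotpNr u v : dotp v (- u) = - dotp v u.
Proof. by rewrite dotpC dotpNl dotpC. Qed.

Lemma dotpBr u v w : dotp w (u - v) = dotp w u - dotp w v.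
Proof. by rewrite dotpDr dotpNr. Qed.

Lemma dotp0l v : dotp 0 v = 0.
Proof. by rewrite /dotp big1 // => i _; rewrite mxE mul0r. Qed.

Lemma dotp0r v : dotp v 0 = 0.
Proof. by rewrite dotpC dotp0l. Qed.

Lemma dotp_ge0 v : 0 <= dotp v v.
Proof. by apply: sumr_ge0 => i _; rewrite -expr2 sqr_ge0. Qed.

Lemma enorm_ge0 v : 0 <= enorm v.
Proof. exact: sqrtr_ge0. Qed.

Lemma enorm_sq v : enorm v ^+ 2 = dotp v v.
Proof. by rewrite /enorm sqr_sqrtr // dotp_ge0. Qed.

Lemma dotp_eq0 v : dotp v v = 0 -> v = 0.
Proof.
move=> h; apply/matrixP => i j; rewrite !mxE (ord1 i).
have /psumr_eq0P H : \sum_(k < d) v 0 k * v 0 k = 0 by [].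
have := H (fun k _ => sqr_ge0 (v 0 k) : 0 <= v 0 k * v 0 k) j isT.
by move=> /eqP; rewrite mulf_eq0 orbb => /eqP.
Qed.

Lemma CS u v : dotp u v <= enorm u * enorm v.
Proof.
have [a0|a0] := eqVneq (enorm u) 0.
  have : dotp u u = 0 by rewrite -enorm_sq a0 expr0n.
  by move=> /dotp_eq0 ->; rewrite dotp0l mulr_ge0 // enorm_ge0.
have [b0|b0] := eqVneq (enorm v) 0.
  have : dotp v v = 0 by rewrite -enorm_sq b0 expr0n.
  by move=> /dotp_eq0 ->; rewrite dotp0r mulr_ge0 // enorm_ge0.
set a := enorm u; set b := enorm v.
have ha : 0 < a by rewrite lt_def a0 enorm_ge0.
have hb : 0 < b by rewrite lt_def b0 enorm_ge0.
have H : 0 <= dotp (b *: u - a *: v) (b *: u - a *: v) by apply: dotp_ge0.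
rewrite !dotpBl !dotpBr !dotpZl !dotpZr -!enorm_sq -/a -/b (dotpC v u) in H.
have hab : 0 < a * b by apply: mulr_gt0.
nra.
Qed.

Lemma enormZ a v : 0 <= a -> enorm (a *: v) = a * enorm v.
Proof.
move=> a0; rewrite /enorm dotpZl dotpZr mulrA sqrtrM ?mulr_ge0 //.
by rewrite -expr2 sqrtr_sqr ger0_norm.
Qed.

End Dot.

Section Ana.
Context {R : realType} {d : nat} {f : 'rV[R]_d -> R} {gradf : 'rV[R]_d -> 'rV[R]_d}.
Hypothesis hg : is_gradient f gradf.

Lemma line_is_derive (x v : 'rV[R]_d) (t0 : R) :
  is_derive t0 (1:R) (fun t : R => f (x + t *: v)) (dotp (gradf (x + t0 *: v)) v).
Proof.
set a := x + t0 *: v.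
have Hd := (hg a).1.
have dv : derivable f a v := diff_derivable Hd.
have E : (fun h : R => h^-1 *: (((fun t : R => f (x + t *: v)) \o shift t0) (h *: 1)
     - (fun t : R => f (x + t *: v)) t0)) =
    (fun h : R => h^-1 *: ((f \o shift a) (h *: v) - f a)).
  apply/funext => h /=; congr (_ *: (f _ - _)).
  by rewrite /a scalerDl [h%:A]mulr1 addrCA addrA.
apply: DeriveDef; first by rewrite /derivable E.
by rewrite /derive E -/(derive f a v) deriveE // (hg a).2.
Qed.
End Ana.

Section Ana2.
Context {R : realType} {d : nat} {f : 'rV[R]_d -> R} {gradf : 'rV[R]_d -> 'rV[R]_d}.
Hypothesis hg : is_gradient f gradf.

Lemma grad_min xs : is_minimizer f xs -> gradf xs = 0.
Proof.
move=> hmin; set v := gradf xs.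
pose psi := fun t : R => f (xs + t *: v).
have H0 : is_derive (0:R) 1 psi 0.
  apply: (@derive1_at_min _ psi (-1) 1 0) => //.
  - by move=> t _; case: (line_is_derive hg xs v t).
  - by rewrite in_itv /= ltrN10 ltr01.
  - by move=> t _; rewrite /psi scale0r addr0; apply: hmin.
have H1 := line_is_derive hg xs v 0.
have : dotp (gradf (xs + 0 *: v)) v = 0.
  by rewrite -(@derive_val _ _ _ _ _ _ _ H1) (@derive_val _ _ _ _ _ _ _ H0).
by rewrite scale0r addr0 -/v => /dotp_eq0.
Qed.

Lemma SFO mu : strongly_convex mu f -> forall x y,
  f x + dotp (gradf x) (y - x) + mu / 2 * enorm (y - x) ^+ 2 <= f y.
Proof.
move=> [mu0 hsc] x y.
set v := y - x; set D2 := enorm v ^+ 2.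
pose psi := fun t : R => f (x + t *: v).
set K := f y - f x - mu / 2 * D2.
have D20 : 0 <= D2 by rewrite /D2 sqr_ge0.
have Hq : forall h : R, 0 < h -> h <= 1 ->
    h^-1 *: ((psi \o shift 0) (h *: 1) - psi 0) <= K + mu / 2 * h * D2.
  move=> h h0 h1.
  have := hsc y x h; rewrite h1 ltW //= => /(_ isT).
  have -> : h *: y + (1 - h) *: x = x + h *: v.
    by rewrite /v scalerBr scalerBl scale1r addrCA.
  rewrite /psi /= addr0 [h%:A]mulr1 scale0r addr0 => Hc.
  rewrite -/D2 in Hc.
  have hinv : h^-1 * h = 1 by rewrite mulVf // gt_eqF.
  rewrite /GRing.scale /=.
  have : (f (x + h *: v) - f x) <= h * (K + mu / 2 * h * D2).
    rewrite /K; nra.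
  move=> Hb; rewrite -(ler_pM2l h0) mulrA (mulrC h) hinv mul1r; exact: Hb.
have Hd := line_is_derive hg x v 0.
have dpsi : derivable psi 0 1 by case: Hd.
suff : 'D_1 psi 0 <= K.
  by rewrite (@derive_val _ _ _ _ _ _ _ Hd) scale0r addr0 /K; lra.
apply/ler_addgt0Pr => e e0.
rewrite ['D_1 psi 0]cvg_at_rightE //.
apply: limr_le.
  rewrite -(cvg_at_rightE (fun h : R => h^-1 *: ((psi \o shift 0) _ - psi 0))) //.
  apply: cvg_trans dpsi; apply: cvg_app.
  move=> A [r r0 Ar]; exists r => // z zr z0; apply: Ar => //.
  exact/lt0r_neq0.
set del := Num.min 1 (e / (mu / 2 * D2 + 1)).
have del0 : 0 < del.
  by rewrite lt_min ltr01 divr_gt0 // ltr_wpDl // mulr_ge0 // divr_ge0 // ltW.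
near=> h.
have h0 : 0 < h by near: h; exists 1 => //=.
have hd : h <= del.
  near: h; exists del => //= z; rewrite /ball_ /= sub0r normrN => /ltr_normlP [_ hz] _.
  exact: ltW.
have h1 : h <= 1 by apply: (le_trans hd); rewrite ge_min lexx.
apply: (le_trans (Hq h h0 h1)); rewrite lerD2l.
have : h <= e / (mu / 2 * D2 + 1) by apply: (le_trans hd); rewrite ge_min lexx orbT.
rewrite ler_pdivlMr; last by rewrite ltr_wpDl // mulr_ge0 // divr_ge0 // ltW.
have : 0 <= mu / 2 * D2 by rewrite mulr_ge0 // divr_ge0 // ltW.
nra.
Unshelve. all: by end_near.
Qed.

End Ana2.

Section Ana3.
Context {R : realType} {d : nat} {f : 'rV[R]_d -> R} {gradf : 'rV[R]_d -> 'rV[R]_d}.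
Hypothesis hg : is_gradient f gradf.
Local Open Scope classical_set_scope.

Lemma DESC L : smooth L gradf -> forall x y,
  f y <= f x + dotp (gradf x) (y - x) + L / 2 * enorm (y - x) ^+ 2.
Proof.
move=> [L0 hL] x y.
set v := y - x; set D2 := enorm v ^+ 2; set a := dotp (gradf x) v.
set c := L / 2 * D2.
pose psi := fun t : R => f (x + t *: v).
pose chi := psi - a \*: (@id R) - c \*: ((@id R) ^+ 2).
have Hchi : forall t : R, is_derive t 1 chi
    (dotp (gradf (x + t *: v)) v - a - c * (2 * t)).
  move=> t.
  have H := is_deriveB (is_deriveB (line_is_derive hg x v t)
             (is_deriveZ a (is_derive_id t 1)))
             (is_deriveZ c (is_deriveX 2 (is_derive_id t 1))).
  apply: is_derive_eq.
  by rewrite /GRing.scale /= !mulr1 expr1.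
have dchi : forall t : R, derivable chi t 1 by move=> t; case: (Hchi t).
have cchi : {within `[0, 1], continuous chi}.
  apply: continuous_subspaceT => t.
  exact/differentiable_continuous/derivable1_diffP.
have dle : forall t, t \in `]0, 1[%R -> chi^`() t <= 0.
  move=> t; rewrite in_itv /= => /andP [t0 t1].
  rewrite derive1E (@derive_val _ _ _ _ _ _ _ (Hchi t)).
  have h1 := CS (gradf (x + t *: v) - gradf x) v.
  have h2 := hL (x + t *: v) x.
  have e : x + t *: v - x = t *: v by rewrite addrC addKr.
  rewrite e enormZ ?(ltW t0) // in h2.
  rewrite dotpBl -/a in h1.
  have ev := enorm_ge0 v.
  have en := enorm_ge0 (gradf (x + t *: v) - gradf x).
  rewrite /c /D2; nra.
have := @ler0_derive1_nincr R chi 0 1 (fun t _ => dchi t) dle cchi 0 1 (lexx _) ler01 (lexx _).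
move=> H.
have H' : f (x + 1 *: v) - a * 1 - c * (1 * 1) <= f (x + 0 *: v) - a * 0 - c * (0 * 0) := H.
rewrite scale0r scale1r addr0 /v [x + (y - x)]addrC subrK !mulr0 !mulr1 !subr0 in H'.
rewrite -/v -/D2 -/a -/c; lra.
Qed.
End Ana3.

Section Coco.
Context {R : realType} {d : nat}.

Lemma cocoerc (h : 'rV[R]_d -> R) (gh : 'rV[R]_d -> 'rV[R]_d) (M : R) :
  (forall x y, h x + dotp (gh x) (y - x) <= h y) ->
  (forall x y, h y <= h x + dotp (gh x) (y - x) + M / 2 * dotp (y - x) (y - x)) ->
  forall x y t, 0 < t ->
  (2 * t - M * t ^+ 2) * dotp (gh x - gh y) (gh x - gh y) <= dotp (gh x - gh y) (x - y).
Proof.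
move=> hc hd x y t t0.
set w := gh y - gh x.
have c1 := hc x (y - t *: w).
have d1 := hd y (y - t *: w).
have c2 := hc y (x + t *: w).
have d2 := hd x (x + t *: w).
have e1 : y - t *: w - y = - (t *: w) by rewrite addrC addKr.
have e2 : x + t *: w - x = t *: w by rewrite addrC addKr.
rewrite e1 in d1; rewrite e2 in d2.
have ew : gh x - gh y = - w by rewrite opprB.
rewrite ew.
rewrite /w in c1 d1 c2 d2 *.
rewrite !(dotpBl, dotpBr, dotpDl, dotpDr, dotpZl, dotpZr, dotpNl, dotpNr) in c1 d1 c2 d2 *.
rewrite !(dotpC (gh x) (gh y), dotpC x (gh x), dotpC x (gh y), dotpC y (gh x), dotpC y (gh y)) in c1 d1 c2 d2 *.
nra.
Qed.
End Coco.

Section SCsec.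
Context {R : realType} {d : nat} {f : 'rV[R]_d -> R} {gradf : 'rV[R]_d -> 'rV[R]_d}.
Hypothesis hg : is_gradient f gradf.

Lemma SC mu L x xs : strongly_convex mu f -> smooth L gradf -> gradf xs = 0 ->
  dotp (gradf x - mu *: (x - xs)) (gradf x - mu *: (x - xs)) <=
  (L - mu) * dotp (gradf x - mu *: (x - xs)) (x - xs).
Proof.
move=> hsc hsm g0.
have mu0 : 0 < mu by case: hsc.
pose h := fun z => f z - mu / 2 * dotp z z.
pose gh := fun z => gradf z - mu *: z.
have hc : forall x y, h x + dotp (gh x) (y - x) <= h y.
  move=> a b; have := SFO hg mu hsc a b; rewrite enorm_sq /h /gh.
  rewrite !(dotpBl, dotpBr, dotpDl, dotpDr, dotpZl, dotpZr, dotpNl, dotpNr).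
  rewrite !(dotpC b a); lra.
have hd : forall x y, h y <= h x + dotp (gh x) (y - x) + (L - mu) / 2 * dotp (y - x) (y - x).
  move=> a b; have := DESC hg L hsm a b; rewrite enorm_sq /h /gh.
  rewrite !(dotpBl, dotpBr, dotpDl, dotpDr, dotpZl, dotpZr, dotpNl, dotpNr).
  rewrite !(dotpC b a); lra.
have key := @cocoerc R d h gh (L - mu) hc hd x xs.
have ew : gh x - gh xs = gradf x - mu *: (x - xs).
  by rewrite /gh /= g0 sub0r opprK scalerBr opprB addrA addrAC.
rewrite ew in key.
set w := gradf x - mu *: (x - xs) in key *.
set W := dotp w w in key *; set s := dotp w (x - xs) in key *.
have W0 : 0 <= W by apply: dotp_ge0.
have [M0|M0] := ltP 0 (L - mu).
  have := key (L - mu)^-1; rewrite invr_gt0 => /(_ M0).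
  rewrite expr2 mulrA mulfV ?gt_eqF // mul1r.
  have -> : 2 * (L - mu)^-1 - (L - mu)^-1 = (L - mu)^-1 by lra.
  by rewrite ler_pdivrMl // mulrC.
have WW : W = 0.
  apply/eqP; rewrite eq_le W0 andbT leNgt; apply/negP => Wp.
  have := key ((`|s| + 1) / W); rewrite divr_gt0 // ?ltr_wpDl // => /(_ isT).
  set t := (`|s| + 1) / W.
  have tW : t * W = `|s| + 1 by rewrite /t mulfVK ?gt_eqF.
  have ss : s <= `|s| := ler_norm s.
  have t0 : 0 < t by rewrite divr_gt0 // ltr_wpDl.
  have hp : 0 <= - (L - mu) * (t ^+ 2 * W).
    by rewrite mulr_ge0 // ?oppr_ge0 // mulr_ge0 // sqr_ge0.
  have -> : (2 * t - (L - mu) * t ^+ 2) * W = 2 * (t * W) + - (L - mu) * (t ^+ 2 * W) by ring.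
  have sa : 0 <= `|s| := normr_ge0 s.
  rewrite tW => HH; move: (- (L - mu) * (t ^+ 2 * W)) hp HH => X hp HH; clear -ss sa hp HH; lra.
have w0 : w = 0 by apply: dotp_eq0.
by rewrite /s w0 dotp0l mulr0 WW.
Qed.
End SCsec.

Section Scal.
Context {R : realType}.

Lemma scalar_ineq (L mu eta r D G p m q s2 : R) :
 0 < mu -> 0 < L -> 0 < eta -> eta * L <= 1 -> 0 <= r -> 0 <= D -> 0 <= G ->
 0 <= q -> s2 = q * L ^+ 2 ->
 p <= G * D -> mu * D ^+ 2 <= p -> G <= L * D ->
 G ^+ 2 - 2 * mu * p + mu ^+ 2 * D ^+ 2 <= (L - mu) * (p - mu * D ^+ 2) ->
 3 <= m -> L <= m * mu ->
 2 * p - eta * G ^+ 2 < 2 * r * G + eta * s2 ->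
 D ^+ 2 - 2 * eta * p + eta ^+ 2 * G ^+ 2 + eta ^+ 2 * s2 <= m * (2 * r ^+ 2 + q).
Proof.
move=> mu0 L0 e0 eL r0 D0 G0 q0 -> pGD muDp GLD hSC m3 Lm hc.
have m0 : 0 < m by lra.
have [D00|Dp] := eqVneq D 0.
  subst D.
  have G00 : G = 0 by apply/eqP; rewrite eq_le G0 andbT; move: GLD; rewrite mulr0.
  subst G.
  have p00 : p = 0 by apply/eqP; rewrite eq_le; apply/andP; split; move: pGD muDp; rewrite !mul0r ?expr0n /= ?mulr0 // => a b.
  subst p.
  rewrite !expr0n /= !mulr0 !subr0 add0r.
  have h1 : (eta * L) ^+ 2 <= 1 by rewrite expr_le1 // mulr_ge0 // ltW.
  have : eta ^+ 2 * (q * L ^+ 2) = (eta * L) ^+ 2 * q by ring.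
  move=> ->; nra.
have Dpos : 0 < D by rewrite lt_def Dp.
have muL : mu <= L.
  have : mu * D ^+ 2 <= L * D ^+ 2 by nra.
  by rewrite ler_pM2r // exprn_gt0.
set u := eta * L.
have u0 : 0 < u by rewrite mulr_gt0.
have u1 : u <= 1 by [].
have emu : eta * mu <= u by rewrite /u ler_pM2l.
set A := L + mu - 2 * eta * mu * L.
set c := 1 - eta * (L + mu) / 2.
have A0 : 0 <= A.
  have : eta * mu * L <= mu by nra.
  rewrite /A; lra.
have eLm : eta * (L + mu) = u + eta * mu by rewrite /u; ring.
have c0 : 0 <= c.
  rewrite /c eLm; lra.
set k := m * mu.
have kL : L <= k by [].
have disc : A ^+ 2 <= 8 * c * k * L.
  have f0 : 0 <= 8 * k * L - (L + mu) ^+ 2.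
    have a0 : 0 <= (L - mu) * (3 * L + mu) by apply: mulr_ge0; lra.
    have a1 : (L + mu) ^+ 2 <= 4 * L ^+ 2.
      by rewrite -subr_ge0 (_ : _ - _ = (L - mu) * (3 * L + mu)) //; ring.
    have a2 : L ^+ 2 <= k * L by rewrite expr2 ler_pM2r.
    have a3 : 0 <= L ^+ 2 by apply: sqr_ge0.
    lra.
  have f1 : 0 <= (L - mu) * (4 * k - L + mu) by nra.
  have h1 : 0 <= (1 - u) * (8 * k * L - (L + mu) ^+ 2) by nra.
  have h2 : 0 <= u * ((L - mu) * (4 * k - L + mu)) by nra.
  have h3 : 0 <= u * (1 - u) * (4 * mu ^+ 2) by nra.
  have eA : A = L + mu - 2 * u * mu by rewrite /A /u; ring.
  have ec : 8 * c * k * L = 4 * k * (2 * L - u * (L + mu)).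
    by rewrite /c /u; field.
  rewrite eA ec; nra.
have stepd : A * r * G - c * G ^+ 2 <= 2 * k * L * r ^+ 2.
  have [c00|cp] := eqVneq c 0.
    have : A ^+ 2 <= 0 by rewrite c00 mulr0 !mul0r in disc.
    move=> hA; have : A = 0 by nra.
    have : 0 <= k * L * r ^+ 2 by rewrite !mulr_ge0 // ?sqr_ge0; lra.
    move=> hh hA0; rewrite hA0 c00; lra.
  have cpos : 0 < c by rewrite lt_def cp.
  have : 4 * c * (A * r * G - c * G ^+ 2) <= 4 * c * (2 * k * L * r ^+ 2).
    have sq : 0 <= (A * r - 2 * c * G) ^+ 2 by apply: sqr_ge0.
    have hh : A ^+ 2 * r ^+ 2 <= 8 * c * k * L * r ^+ 2.
      by apply: ler_wpM2r => //; apply: sqr_ge0.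
    rewrite -subr_ge0 (_ : _ - _ = (8 * c * k * L * r ^+ 2 - A ^+ 2 * r ^+ 2) + (A * r - 2 * c * G) ^+ 2); last by ring.
    by rewrite addr_ge0 // subr_ge0.
  by rewrite ler_pM2l // mulr_gt0.
have stepe : eta * (L + mu) * (q * L ^+ 2) / 2 <= k * L * q.
  set X := (L + mu) / 2 * (q * L).
  have X0 : 0 <= X by rewrite /X !mulr_ge0 //; lra.
  have e1 : eta * (L + mu) * (q * L ^+ 2) / 2 = u * X by rewrite /X /u; ring.
  have e2 : k * L * q = k * (q * L) by ring.
  rewrite e1 e2.
  have h1 : u * X <= X by rewrite ler_piMl.
  have h2 : X <= k * (q * L).
    rewrite /X ler_wpM2r // ?mulr_ge0 //; [exact: ltW | lra].
  exact: le_trans h1 h2.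
have SC' : mu * L * D ^+ 2 <= (L + mu) * p - G ^+ 2.
  rewrite -subr_ge0 (_ : _ - _ = (L - mu) * (p - mu * D ^+ 2) - (G ^+ 2 - 2 * mu * p + mu ^+ 2 * D ^+ 2)); last by ring.
  by rewrite subr_ge0.
have hp : A * p <= A * (r * G + eta * (q * L ^+ 2) / 2 + eta * G ^+ 2 / 2).
  by apply: ler_wpM2l => //; lra.
suff : mu * L * (D ^+ 2 - 2 * eta * p + eta ^+ 2 * G ^+ 2 + eta ^+ 2 * (q * L ^+ 2))
    <= mu * L * (m * (2 * r ^+ 2 + q)).
  by rewrite ler_pM2l // mulr_gt0.
have E : mu * L * (D ^+ 2 - 2 * eta * p + eta ^+ 2 * G ^+ 2 + eta ^+ 2 * (q * L ^+ 2)) =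
   mu * L * D ^+ 2 - ((L + mu) * p - G ^+ 2) + (A * p - (1 - eta ^+ 2 * mu * L) * G ^+ 2 + eta ^+ 2 * mu * L * (q * L ^+ 2)).
  by rewrite /A; ring.
have E2 : A * (r * G + eta * (q * L ^+ 2) / 2 + eta * G ^+ 2 / 2) - (1 - eta ^+ 2 * mu * L) * G ^+ 2 + eta ^+ 2 * mu * L * (q * L ^+ 2) = (A * r * G - c * G ^+ 2) + eta * (L + mu) * (q * L ^+ 2) / 2.
  by rewrite /A /c; field.
have E3 : mu * L * (m * (2 * r ^+ 2 + q)) = 2 * k * L * r ^+ 2 + k * L * q by rewrite /k; ring.
rewrite E E3.
have F : A * p - (1 - eta ^+ 2 * mu * L) * G ^+ 2 + eta ^+ 2 * mu * L * (q * L ^+ 2) <=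
   (A * r * G - c * G ^+ 2) + eta * (L + mu) * (q * L ^+ 2) / 2.
  rewrite -E2; lra.
lra.
Qed.
End Scal.

Section RealPart.
Context {R : realType} {d : nat} {f : 'rV[R]_d -> R} {gradf : 'rV[R]_d -> 'rV[R]_d}.

Lemma real_part (mu L r sigma eta : R) (xs x : 'rV[R]_d) :
  is_gradient f gradf -> strongly_convex mu f -> smooth L gradf ->
  is_minimizer f xs -> enorm xs <= r -> 0 < eta <= 1 / L ->
  let Rad := r + Num.sqrt (Num.max 3 (L / mu)) * Num.sqrt (2 * r ^+ 2 + sigma ^+ 2 / L ^+ 2) in
  enorm x <= Rad ->
  dotp (x - eta *: gradf x) (x - eta *: gradf x) + eta ^+ 2 * sigma ^+ 2 <= Rad ^+ 2.
Proof.
move=> hg hsc hsm hmin hxs /andP [e0 eL] Rad hx.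
have mu0 : 0 < mu by case: hsc.
have L0 : 0 < L by case: hsm.
have g0 := grad_min hg xs hmin.
set g := gradf x.
set y := x - xs.
set D := enorm y; set G := enorm g; set p := dotp g y.
have D0 : 0 <= D := enorm_ge0 _.
have G0 : 0 <= G := enorm_ge0 _.
have pGD : p <= G * D := CS _ _.
have GLD : G <= L * D.
  by have := (proj2 hsm) x xs; rewrite g0 subr0.
have muDp : mu * D ^+ 2 <= p.
  have h1 := SFO hg mu hsc x xs.
  have h2 := SFO hg mu hsc xs x.
  rewrite g0 dotp0l addr0 in h2.
  have e1 : enorm (xs - x) ^+ 2 = D ^+ 2.
    by rewrite /D !enorm_sq -opprB dotpNl dotpNr opprK.
  have e2 : dotp g (xs - x) = - p by rewrite /p -dotpNr opprB.
  rewrite e1 e2 in h1; rewrite -/y -/D in h2.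
  lra.
have hSC := SC hg mu L x xs hsc hsm g0.
rewrite -/g -/y in hSC.
have E1 : dotp (g - mu *: y) (g - mu *: y) = G ^+ 2 - 2 * mu * p + mu ^+ 2 * D ^+ 2.
  rewrite /G /D /p !enorm_sq (dotpBl g (mu *: y)) !(dotpBr g (mu *: y)).
  rewrite !(dotpZl mu y) !(dotpZr mu y) (dotpC y g); ring.
have E2 : dotp (g - mu *: y) y = p - mu * D ^+ 2.
  by rewrite /D /p enorm_sq (dotpBl g (mu *: y)) (dotpZl mu y).
rewrite E1 E2 in hSC.
set m := Num.max 3 (L / mu).
have m3 : 3 <= m by rewrite le_max lexx.
have Lm : L <= m * mu.
  have : L / mu <= m by rewrite le_max lexx orbT.
  by rewrite ler_pdivrMr.
set q := sigma ^+ 2 / L ^+ 2.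
have q0 : 0 <= q by rewrite divr_ge0 // sqr_ge0.
have s2q : sigma ^+ 2 = q * L ^+ 2 by rewrite /q divfK // expf_neq0 // gt_eqF.
have r0 : 0 <= r := le_trans (enorm_ge0 _) hxs.
have eL' : eta * L <= 1 by rewrite -ler_pdivlMr // mul1r.
set S := Num.sqrt m * Num.sqrt (2 * r ^+ 2 + q).
have S0 : 0 <= S by rewrite mulr_ge0 // sqrtr_ge0.
have SS : S ^+ 2 = m * (2 * r ^+ 2 + q).
  rewrite /S exprMn !sqr_sqrtr //; last by lra.
  by rewrite addr_ge0 // ?mulr_ge0 // sqr_ge0.
have RadE : Rad = r + S by [].
rewrite RadE.
have nxs0 := enorm_ge0 xs.
have xsxs : dotp xs xs <= r ^+ 2.
  by rewrite -enorm_sq ler_pXn2r // nnegrE.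
have [hc|hc] := ltP (2 * p - eta * G ^+ 2) (2 * r * G + eta * sigma ^+ 2).
  have hZ := scalar_ineq L mu eta r D G p m q (sigma ^+ 2) mu0 L0 e0 eL' r0 D0 G0 q0 s2q pGD muDp GLD hSC m3 Lm hc.
  set z := y - eta *: g.
  have zz : dotp z z = D ^+ 2 - 2 * eta * p + eta ^+ 2 * G ^+ 2.
    rewrite /z /D /G /p !enorm_sq (dotpBl y (eta *: g)) !(dotpBr y (eta *: g)).
    rewrite !(dotpZl eta g) !(dotpZr eta g) (dotpC g y); ring.
  have ec : x - eta *: g = xs + z by rewrite /z /y addrA [xs + _]addrC subrK.
  rewrite ec (dotpDl xs z) !(dotpDr xs z) (dotpC z xs).
  have nz0 := enorm_ge0 z.
  have zz' : enorm z ^+ 2 = dotp z z := enorm_sq z.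
  have cs : dotp xs z <= enorm xs * enorm z := CS xs z.
  have nzS : enorm z <= S.
    have : enorm z ^+ 2 <= S ^+ 2.
      rewrite SS zz' zz; have : 0 <= eta ^+ 2 * sigma ^+ 2 by rewrite mulr_ge0 // sqr_ge0.
      lra.
    by rewrite ler_pXn2r // nnegrE.
  have h1 : enorm xs * enorm z <= r * enorm z by rewrite ler_wpM2r.
  have h2 : r * enorm z <= r * S by rewrite ler_wpM2l.
  have h3 : dotp z z + eta ^+ 2 * sigma ^+ 2 <= S ^+ 2.
    rewrite SS zz; lra.
  have -> : (r + S) ^+ 2 = r ^+ 2 + 2 * (r * S) + S ^+ 2 by ring.
  lra.
have cc : dotp (x - eta *: g) (x - eta *: g) = dotp x x - 2 * eta * (p + dotp g xs) + eta ^+ 2 * G ^+ 2.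
  rewrite /p /y /G enorm_sq (dotpBl x (eta *: g)) !(dotpBr x (eta *: g)) (dotpBr x xs g).
  rewrite !(dotpZl eta g) !(dotpZr eta g) (dotpC x g); ring.
rewrite cc.
have gxs : - (G * r) <= dotp g xs.
  have h := CS g (- xs).
  have en : enorm (- xs) = enorm xs by rewrite /enorm dotpNl dotpNr opprK.
  rewrite dotpNr en -/G in h.
  have : G * enorm xs <= G * r by rewrite ler_wpM2l.
  lra.
have xx : dotp x x <= (r + S) ^+ 2.
  have hx' : enorm x <= r + S by rewrite -RadE.
  have rS : 0 <= r + S by rewrite addr_ge0.
  by rewrite -enorm_sq ler_pXn2r // nnegrE ?enorm_ge0.
have h1 : 0 <= eta * ((2 * p - eta * G ^+ 2) - (2 * r * G + eta * sigma ^+ 2)).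
  by rewrite mulr_ge0 ?subr_ge0 // ltW.
have h2 : - (eta * (G * r)) <= eta * dotp g xs.
  by rewrite -mulrN ler_wpM2l // ltW.
have -> : dotp x x - 2 * eta * (p + dotp g xs) + eta ^+ 2 * G ^+ 2 + eta ^+ 2 * sigma ^+ 2 =
  dotp x x - eta * ((2 * p - eta * G ^+ 2) - (2 * r * G + eta * sigma ^+ 2)) - 2 * (eta * dotp g xs) - 2 * (eta * (G * r)) by ring.
move: h1 h2 xx.
move: (eta * ((2 * p - eta * G ^+ 2) - (2 * r * G + eta * sigma ^+ 2))) (eta * dotp g xs) (eta * (G * r)) (dotp x x) ((r + S) ^+ 2) => T1 T2 T3 X Y.
clear; lra.
Qed.
End RealPart.

Section Exp.
Context {R : realType} {d : nat}.

Lemma expect_step (d0 : measure_display) (Omega : measurableType d0) (P : probability Omega R)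
  (G : Omega -> 'rV[R]_d) (gx x : 'rV[R]_d) (eta s : R) :
  (forall i : 'I_d, P.-integrable setT (fun w => (G w ord0 i)%:E) /\
      ('E_P[fun w => (G w ord0 i)%R] = (gx ord0 i)%:E)%E) ->
  ('E_P[fun w => (enorm (G w - gx) ^+ 2)%R] <= s%:E)%E ->
  ('E_P[fun w => (enorm (x - eta *: G w) ^+ 2)%R] <=
     (dotp (x - eta *: gx) (x - eta *: gx) + eta ^+ 2 * s)%:E)%E.
Proof.
move=> hG hV.
rewrite unlock in hV *.
set c := x - eta *: gx.
have iG i : P.-integrable setT (fun w => (G w ord0 i)%:E) := (hG i).1.
have EG i : (\int[P]_w (G w ord0 i)%:E = (gx ord0 i)%:E)%E.
  by have := (hG i).2; rewrite unlock.
have mG i : measurable_fun setT (fun w => G w ord0 i).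
  by apply/measurable_EFinP; exact: (measurable_int _ (iG i)).
have iC (k : R) : P.-integrable setT (fun _ => k%:E).
  exact: (finite_measure_integrable_cst P k measurableT).
have IC (k : R) : (\int[P]_w k%:E = k%:E)%E.
  by have := expectation_cst P k; rewrite unlock => h; exact: h.
pose Y w := \sum_(i < d) (G w ord0 i - gx ord0 i) * (G w ord0 i - gx ord0 i).
have eY w : enorm (G w - gx) ^+ 2 = Y w.
  by rewrite enorm_sq /dotp; apply: eq_bigr => i _; rewrite !mxE.
pose Lin w := \sum_(i < d) c ord0 i * (G w ord0 i - gx ord0 i).
have eF w : enorm (x - eta *: G w) ^+ 2 = dotp c c + (- (2 * eta)) * Lin w + eta ^+ 2 * Y w.
  have e : x - eta *: G w = c - eta *: (G w - gx).
    by rewrite /c scalerBr opprB addrA subrK.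
  set v := G w - gx.
  have eL : dotp c v = Lin w by rewrite /dotp; apply: eq_bigr => i _; rewrite !mxE.
  have eV : dotp v v = Y w by rewrite -enorm_sq eY.
  rewrite e enorm_sq (dotpBl c (eta *: v)) !(dotpBr c (eta *: v)) !(dotpZl eta v) !(dotpZr eta v).
  rewrite (dotpC v c) eL eV; ring.
have mY : measurable_fun setT Y.
  apply: measurable_sum => i.
  by apply: measurable_funM; apply: measurable_funB => //; exact: measurable_cst.
have iY : P.-integrable setT (fun w => (Y w)%:E).
  apply/integrableP; split; first exact/measurable_EFinP.
  rewrite (eq_integral (fun w => (Y w)%:E)); last first.
    by move=> w _; rewrite gee0_abs // lee_fin -eY sqr_ge0.
  apply: (le_lt_trans _ (ltry s)).
  apply: le_trans hV; rewrite le_eqVlt; apply/orP; left; apply/eqP.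
  by apply: eq_integral => w _; rewrite eY.
have iLin : P.-integrable setT (fun w => (Lin w)%:E).
  apply: (eq_integrable measurableT (fun w => \sum_(i < d) ((c ord0 i)%:E * ((G w ord0 i)%:E - (gx ord0 i)%:E)))%E).
    by move=> w _; rewrite /Lin -sumEFin; apply: eq_bigr => i _; rewrite EFinM EFinB.
  apply: (integrable_sum measurableT) => i _; apply: (integrableZl measurableT).
  exact: (integrableB measurableT (iG i) (iC _)).
have ILin : (\int[P]_w (Lin w)%:E = 0)%E.
  rewrite (eq_integral (fun w => \sum_(i < d) ((c ord0 i)%:E * ((G w ord0 i)%:E - (gx ord0 i)%:E)))%E); last first.
    by move=> w _; rewrite /Lin -sumEFin; apply: eq_bigr => i _; rewrite EFinM EFinB.
  rewrite (integral_sum measurableT); last first.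
    move=> i; apply: (integrableZl measurableT).
    exact: (integrableB measurableT (iG i) (iC _)).
  apply: big1 => i _.
  rewrite (integralZl measurableT); last exact: (integrableB measurableT (iG i) (iC _)).
  rewrite (integralB measurableT (iG i) (iC _)) EG.
  rewrite IC.
  by rewrite subee // mule0.
rewrite (eq_integral (fun w => ((dotp c c)%:E + (- (2 * eta))%:E * (Lin w)%:E) + (eta ^+ 2)%:E * (Y w)%:E)%E); last first.
  by move=> w _; rewrite eF EFinD EFinD !EFinM.
rewrite (integralD measurableT); last 2 first.
- exact: (integrableD measurableT (iC _) (integrableZl measurableT _ iLin)).
- exact: (integrableZl measurableT _ iY).
rewrite (integralD measurableT (iC _) (integrableZl measurableT _ iLin)).
rewrite (integralZl measurableT iLin) ILin mule0 adde0.
rewrite IC.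
rewrite (integralZl measurableT iY).
have fY := integrable_fin_num measurableT iY.
rewrite -(fineK fY) -EFinM -EFinD lee_fin lerD2l.
have hV' : (\int[P]_w (Y w)%:E <= s%:E)%E.
  by apply: le_trans hV; rewrite le_eqVlt; apply/orP; left; apply/eqP; apply: eq_integral => w _; rewrite eY.
rewrite -(fineK fY) lee_fin in hV'.
by rewrite ler_wpM2l // sqr_ge0.
Qed.
End Exp.

Theorem theorem2 (R : realType) (d : nat) (f : 'rV[R]_d -> R)
  (gradf : 'rV[R]_d -> 'rV[R]_d) (mu L r sigma eta : R) (xs : 'rV[R]_d)
  (d0 : measure_display) (Omega : measurableType d0) (P : probability Omega R)
  (g : nat -> 'rV[R]_d -> Omega -> 'rV[R]_d) :
  is_gradient f gradf ->
  strongly_convex mu f ->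
  smooth L gradf ->
  is_minimizer f xs ->
  enorm xs <= r ->
  0 < eta <= 1 / L ->
  (* unbiasedness: E[g k x xi] = gradf x, componentwise *)
  (forall k x (i : 'I_d), P.-integrable setT (fun w => (g k x w ord0 i)%:E) /\
      ('E_P[fun w => (g k x w ord0 i)%R] = (gradf x ord0 i)%:E)%E) ->
  (* bounded variance *)
  (forall k x, ('E_P[fun w => (enorm (g k x w - gradf x) ^+ 2)%R] <= (sigma ^+ 2)%:E)%E) ->
  let kappa := L / mu in
  let Rad := r + Num.sqrt (Num.max 3 kappa) * Num.sqrt (2 * r ^+ 2 + sigma ^+ 2 / L ^+ 2) in
  forall (k : nat) (x : 'rV[R]_d), enorm x <= Rad ->
    ('E_P[fun w => (enorm (x - eta *: g k x w) ^+ 2)%R] <= (Rad ^+ 2)%:E)%E.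
Proof.
move=> hg hsc hsm hmin hxs heta hunb hvar kappa Rad k x hx.
apply: le_trans (expect_step d0 Omega P (g k x) (gradf x) x eta (sigma ^+ 2) (hunb k x) (hvar k x)) _.
rewrite lee_fin.
exact: (real_part mu L r sigma eta xs x hg hsc hsm hmin hxs heta hx).
Qed.
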